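(* Fix $n$. If $K_{s_1}^{t_1}$ and $K_{s_2}^{t_2}$ are graphs with $2\le t_i\le s_i$ and $s_1+t_1=s_2+t_2=n$ that are $D$-cospectral, then they are isomorphic. That is, no two non-isomorphic graphs in $\mathbb{K}_{s}^{t}=\{K_{s}^{t}\mid 2\leq t\leq s,\ s+t=n\}$ are $D$-cospectral.
   Context: Two connected graphs are $D$-cospectral if their distance matrices have the same spectrum. $K_{s}^{t}$ denotes the graph on $s+t$ vertices obtained from the complete graph $K_s$ by attaching a pendant edge (a new vertex of degree 1) to each of $t$ distinct vertices of $K_s$. *)

(* Defs.v *)
From HB Require Import structures.
From mathcomp Require Import all_boot all_order all_algebra all_fingroup.
Set Implicit Arguments. Unset Strict Implicit. Unset Printing Implicit Defensive.
Import Order.TTheory GRing.Theory Num.Theory.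

(* A simple graph on a finite vertex type T is given by its adjacency relation
   (assumed symmetric and irreflexive; the graphs below are). *)

Fixpoint reach (T : finType) (e : rel T) (k : nat) (x y : T) : bool :=
  match k with
  | 0 => x == y
  | k'.+1 => reach e k' x y || [exists z, e x z && reach e k' z y]
  end.

(* Graph distance: the least k such that y is reachable from x by a walk of
   length <= k (for connected graphs any such distance is < #|T|). *)
Definition gdist (T : finType) (e : rel T) (x y : T) : nat :=
  find (fun k => reach e k x y) (iota 0 #|T|).

Definition distmx (n : nat) (e : rel 'I_n) : 'M[int]_n :=
  \matrix_(i, j) Posz (gdist e i j).

(* D-cospectral: distance matrices have the same spectrum, i.e. the same
   characteristic polynomial (spectrum counted with multiplicities). *)
Definition D_cospectral (n : nat) (e1 e2 : rel 'I_n) : Prop :=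
  char_poly (distmx e1) = char_poly (distmx e2).

Definition graph_iso (n : nat) (e1 e2 : rel 'I_n) : Prop :=
  exists f : {perm 'I_n}, forall x y, e1 x y = e2 (f x) (f y).

(* K_s^t on vertex set 'I_n (intended n = s + t): vertices 0..s-1 form the
   clique K_s, and vertex s + k (k < t) is a pendant vertex attached to k. *)
Definition pend (s t : nat) (i j : nat) : bool := (s <= i < s + t) && (j == i - s).

Definition Kst (s t n : nat) : rel 'I_n :=
  fun i j => (i != j) &&
    [|| ((i < s) && (j < s)), pend s t i j | pend s t j i].
Arguments Kst s t n : clear implicits.

(* Main.v *)
Require Import Defs.
From HB Require Import structures.
From mathcomp Require Import all_boot all_order all_algebra all_fingroup.
From mathcomp Require Import zify.
Import GRing.Theory.

Definition dd (s i j : nat) : nat :=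
 if i == j then 0 else
 if (i < s) && (j < s) then 1 else
 if i < s then (if j == i + s then 1 else 2) else
 if j < s then (if i == j + s then 1 else 2) else 3.

Definition adjn (s i j : nat) : bool :=
  (i != j) && [|| (i < s) && (j < s), i == j + s | j == i + s].

Ltac bash := rewrite /dd /adjn; repeat (case: ifP => ?); try lia.

Lemma dd_tri s t i j z : t <= s -> i < s + t -> j < s + t -> z < s + t ->
  adjn s i z -> dd s i j <= (dd s z j).+1.
Proof. move=> ts hi hj hz a; move: a; bash. Qed.

Lemma dd_wit s t i j : t <= s -> i < s + t -> j < s + t -> i != j ->
  exists2 z, z < s + t & adjn s i z && ((dd s z j).+1 == dd s i j).
Proof.
move=> ts hi hj hij.
case a: (adjn s i j).
  exists j => //; rewrite a /=; move: a; bash.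
case: (ltnP i s) => his.
  exists (j - s); first lia. move: a; bash.
exists (i - s); first lia. move: a; bash.
Qed.

Lemma dd_sym s i j : dd s i j = dd s j i.
Proof. bash. Qed.

Lemma dd_le3 s i j : dd s i j <= 3.
Proof. bash. Qed.

Lemma dd0 s i j : (dd s i j == 0) = (i == j).
Proof. bash. Qed.

Lemma Kst_adj s t n (x y : 'I_n) : n = s + t -> Kst s t n x y = adjn s x y.
Proof.
move=> hn; have := ltn_ord x; have := ltn_ord y; rewrite /Kst /adjn /pend -val_eqE /=.
lia.
Qed.

Lemma reach_dd s t n (x y : 'I_n) k : t <= s -> n = s + t ->
  reach (Kst s t n) k x y = (dd s x y <= k).
Proof.
move=> ts hn.
have ho : forall w : 'I_n, w < s + t by move=> w; rewrite -hn.
elim: k x => [|k IH] x /=.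
  by rewrite leqn0 dd0 -val_eqE.
rewrite IH; apply/idP/idP.
  case/orP => [h|]; first exact: (leq_trans h).
  case/existsP => z /andP [a].
  rewrite IH => hz; rewrite Kst_adj // in a.
  have := @dd_tri s t x y z ts (ho x) (ho y) (ho z) a.
  lia.
move=> h; case: (leqP (dd s x y) k) => [//|hk]; apply/orP; right.
have hxy : (x : nat) != y by rewrite -(dd0 s); lia.
have [z hz /andP [a e]] := @dd_wit s t x y ts (ho x) (ho y) hxy.
apply/existsP; have hz' : z < n by rewrite hn.
exists (Ordinal hz') => /=.
rewrite IH Kst_adj //= a /=; lia.
Qed.

Lemma find_le_iota d m a : a <= d < a + m ->
  find (fun k => d <= k) (iota a m) = d - a.
Proof.
elim: m a => [|m IH] a /=; first lia.
move=> h; case: (leqP d a) => [hd|hd]; first lia.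
rewrite IH; lia.
Qed.

Lemma gdist_dd s t n (x y : 'I_n) : t <= s -> n = s + t -> 3 < n ->
  gdist (Kst s t n) x y = dd s x y.
Proof.
move=> ts hn h3; rewrite /gdist card_ord.
rewrite (eq_find (a2 := fun k => dd s x y <= k)); last by move=> k; exact: reach_dd.
rewrite find_le_iota ?subn0 //; have := dd_le3 s x y; lia.
Qed.

Lemma sum_if_in a b c x y : a <= c < b ->
  \sum_(a <= j < b) (if j == c then x else y) = x + (b - a - 1) * y.
Proof.
move=> h; rewrite (big_cat_nat _ (n := c)) /=; try lia.
rewrite [\sum_(c <= j < b) _]big_ltn; last lia.
rewrite eqxx (eq_big_nat _ _ (F2 := fun _ => y)); last by move=> j hj; case: ifP; lia.
rewrite (eq_big_nat _ _ (F2 := fun _ => y) (m := c.+1)); last by move=> j hj; case: ifP; lia.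
rewrite !sum_nat_const_nat. nia.
Qed.

Lemma sum_if_out a b c x y : ~~ (a <= c < b) ->
  \sum_(a <= j < b) (if j == c then x else y) = (b - a) * y.
Proof.
move=> h; rewrite (eq_big_nat _ _ (F2 := fun _ => y)); last by move=> j hj; case: ifP; lia.
by rewrite sum_nat_const_nat.
Qed.

Lemma row_clique s t i : i < s -> t <= s ->
  \sum_(0 <= j < s + t) dd s i j * dd s i j =
  (s - 1) + (if i < t then 1 + (t - 1) * 4 else t * 4).
Proof.
move=> hi ts; rewrite (big_cat_nat _ (n := s)) /=; try lia.
rewrite (eq_big_nat _ _ (F2 := fun j => if j == i then 0 else 1)); last first.
  move=> j hj; rewrite /dd; repeat (case: ifP => ?); lia.
rewrite (eq_big_nat _ _ (F2 := fun j => if j == i + s then 1 else 4) (m := s)); last first.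
  move=> j hj; rewrite /dd; repeat (case: ifP => ?); lia.
rewrite sum_if_in; last lia.
case: ifP => hit.
  rewrite sum_if_in; lia.
rewrite sum_if_out; lia.
Qed.

Lemma row_pend s t i : s <= i < s + t -> t <= s ->
  \sum_(0 <= j < s + t) dd s i j * dd s i j =
  (1 + (s - 1) * 4) + (t - 1) * 9.
Proof.
move=> hi ts; rewrite (big_cat_nat _ (n := s)) /=; try lia.
rewrite (eq_big_nat _ _ (F2 := fun j => if j == i - s then 1 else 4)); last first.
  move=> j hj; rewrite /dd; repeat (case: ifP => ?); lia.
rewrite (eq_big_nat _ _ (F2 := fun j => if j == i then 0 else 9) (m := s)); last first.
  move=> j hj; rewrite /dd; repeat (case: ifP => ?); lia.
rewrite !sum_if_in; lia.
Qed.

Lemma total s t : t <= s ->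
  \sum_(0 <= i < s + t) \sum_(0 <= j < s + t) dd s i j * dd s i j =
  t * ((s - 1) + 1 + (t - 1) * 4) + (s - t) * ((s - 1) + t * 4)
  + t * ((1 + (s - 1) * 4) + (t - 1) * 9).
Proof.
move=> ts; rewrite (big_cat_nat _ (n := s)) /=; try lia.
rewrite (big_cat_nat _ (n := t) (m := 0) (p := s)) /=; try lia.
rewrite (eq_big_nat _ _ (F2 := fun _ => (s - 1) + 1 + (t - 1) * 4) (m := 0) (n := t)); last first.
  by move=> i hi; rewrite row_clique; try lia; case: ifP; lia.
rewrite (eq_big_nat _ _ (F2 := fun _ => (s - 1) + t * 4) (m := t) (n := s)); last first.
  by move=> i hi; rewrite row_clique; try lia; case: ifP; lia.
rewrite (eq_big_nat _ _ (F2 := fun _ => (1 + (s - 1) * 4) + (t - 1) * 9) (m := s)); last first.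
  by move=> i hi; rewrite row_pend; lia.
rewrite !sum_nat_const_nat; lia.
Qed.
Definition fS s t := (t * ((s - 1) + 1 + (t - 1) * 4) + (s - t) * ((s - 1) + t * 4)
  + t * ((1 + (s - 1) * 4) + (t - 1) * 9))%N.
Lemma fS_closed s t : 2 <= t <= s -> fS s t + s + 15 * t = s * s + 8 * s * t + 9 * t * t.
Proof. rewrite /fS => h. nia. Qed.
Lemma fS_inj s1 t1 s2 t2 : 2 <= t1 <= s1 -> 2 <= t2 <= s2 -> s1 + t1 = s2 + t2 ->
  fS s1 t1 = fS s2 t2 -> s1 = s2.
Proof.
move=> h1 h2 e f.
have c1 := @fS_closed s1 t1 h1; have c2 := @fS_closed s2 t2 h2.
wlog lt : s1 t1 s2 t2 h1 h2 e f c1 c2 / s1 <= s2.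
  move=> W; case: (leqP s1 s2) => h; first by apply: (W s1 t1 s2 t2).
  symmetry; apply: (W s2 t2 s1 t1) => //; lia.
case: (ltngtP s1 s2) => // hl; last lia.
exfalso.
set d := s2 - s1.
have hs2 : s2 = s1 + d by lia.
have ht1 : t1 = t2 + d by lia.
rewrite hs2 ht1 in c1 c2 f. nia.
Qed.

Local Open Scope ring_scope.

Section Alg.
Variables (R : comNzRingType) (n : nat) (A : 'M[R]_n).

Let Ac := map_mx (@polyC R) A.

Lemma cpm_map (q : {poly R}) (M : 'M[R]_n) :
  map_mx (comp_poly q) (char_poly_mx M) = q%:M - map_mx (@polyC R) M.
Proof.
apply/matrixP => i j; rewrite !mxE comp_polyB comp_polyC.
case: (i == j); by rewrite ?mulr1n ?mulr0n ?comp_polyX ?comp_poly0.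
Qed.

Lemma cp_sq : char_poly (A *m A) \Po 'X^2 =
  (-1) ^+ n * (char_poly A * (char_poly A \Po - 'X)).
Proof.
rewrite /char_poly -!det_map_mx !cpm_map map_mxM.
have -> : ('X^2)%:M - map_mx (@polyC R) A *m map_mx (@polyC R) A =
   ('X%:M - Ac) *m ('X%:M + Ac).
  rewrite mulmxDr !mulmxBl -scalar_mxM scalar_mxC -/Ac.
  by rewrite addrA subrK expr2.
have -> : (- 'X)%:M - Ac = (-1) *: ('X%:M + Ac).
  by rewrite scaleN1r opprD raddfN.
rewrite det_mulmx detZ.
rewrite mulrCA (mulrA ((-1) ^+ n)) -expr2 sqrr_sign mul1r.
by [].
Qed.

End Alg.

Lemma cp_tr2 (R : comNzRingType) n (A B : 'M[R]_n) : (0 < n)%N ->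
  char_poly A = char_poly B -> \tr (A *m A) = \tr (B *m B).
Proof.
move=> n0 e.
have h : char_poly (A *m A) \Po 'X^2 = char_poly (B *m B) \Po 'X^2.
  by rewrite !cp_sq e.
have h2 : char_poly (A *m A) = char_poly (B *m B).
  apply/polyP => i.
  have := congr1 (fun p : {poly R} => p`_(i * 2)%N) h => /=.
  by rewrite !coef_comp_poly_Xn // dvdn_mull // mulnK.
apply: oppr_inj; rewrite -!char_poly_trace //; by rewrite h2.
Qed.
Lemma trD s t n : (t <= s)%N -> n = (s + t)%N -> (3 < n)%N ->
  \tr (distmx (Kst s t n) *m distmx (Kst s t n)) = Posz (fS s t).
Proof.
move=> ts hn h3; rewrite /fS -total // -hn.
rewrite /mxtrace.
rewrite (eq_bigr (fun i : 'I_n => Posz (\sum_(j < n) dd s i j * dd s i j))); last first.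
  move=> i _; rewrite mxE. rewrite (@big_morph _ _ Posz 0 +%R 0%N addn PoszD erefl); apply: eq_bigr => j _.
  by rewrite !mxE !gdist_dd // [dd s j i]dd_sym -PoszM.
rewrite big_mkord (@big_morph _ _ Posz 0 +%R 0%N addn PoszD erefl).
apply: eq_bigr => i _; by rewrite big_mkord.
Qed.

Theorem theorem3p3 (n s1 t1 s2 t2 : nat) :
  (2 <= t1 <= s1)%N -> (2 <= t2 <= s2)%N ->
  (s1 + t1 = n)%N -> (s2 + t2 = n)%N ->
  D_cospectral (Kst s1 t1 n) (Kst s2 t2 n) ->
  graph_iso (Kst s1 t1 n) (Kst s2 t2 n).
Proof.
move=> h1 h2 e1 e2 hc.
have n3 : (3 < n)%N by lia.
have n0 : (0 < n)%N by lia.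
have := @cp_tr2 int n _ _ n0 hc.
rewrite (@trD s1 t1 n) ?(@trD s2 t2 n) //; try lia.
case=> hf.
have hs : s1 = s2 by apply: (@fS_inj s1 t1 s2 t2 h1 h2) => //; lia.
have ht : t1 = t2 by lia.
subst s2 t2; exists 1%g => x y; by rewrite !perm1.
Qed.
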